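(* Let $H=(V,E,w)$ be a hypergraph, $f\in\mathbb{R}^n$, and $e\in E$ a hyperedge with $\mathrm{rank}(e)\ge 2$. Then $$\Big(\max_{u\in e}f(u)+\min_{v\in e}f(v)\Big)^2\le\sum_{\{u,v\}\subseteq e,\ u\ne v}\frac{1}{\mathrm{rank}(e)-1}\big(f(u)+f(v)\big)^2,$$ where the sum is over unordered pairs of distinct vertices of $e$. Equality holds if and only if at most one vertex $v\in e$ has $f(v)\ne0$, or $\mathrm{rank}(e)=2$.
   Context: A hypergraph $H=(V,E,w)$ has vertex set $V$ with $|V|=n$, hyperedges $E$ (subsets of $V$) and positive weights; $\mathrm{rank}(e)=|e|$. *)

(* Defs.v *)
From mathcomp Require Import all_boot all_order all_algebra.
Set Implicit Arguments. Unset Strict Implicit. Unset Printing Implicit Defensive.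
Import Order.TTheory GRing.Theory Num.Theory.
Local Open Scope ring_scope.

Definition hypergraph (R : realFieldType) (n : nat)
  (E : {set {set 'I_n}}) (w : {set 'I_n} -> R) : Prop :=
  forall e, e \in E -> 0 < w e.

Definition rank (n : nat) (e : {set 'I_n}) : nat := #|e|.

(* max_{u in e} f u and min_{u in e} f u (meaningful for nonempty e;
   the seed is an element of e, so it does not affect the value). *)
Definition emax (R : realFieldType) (n : nat) (e : {set 'I_n}) (f : 'I_n -> R) : R :=
  if [pick u in e] is Some u0 then \big[Num.max/f u0]_(u in e) f u else 0.
Definition emin (R : realFieldType) (n : nat) (e : {set 'I_n}) (f : 'I_n -> R) : R :=
  if [pick u in e] is Some u0 then \big[Num.min/f u0]_(u in e) f u else 0.

(* Main.v *)
Require Import Defs.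
From mathcomp Require Import all_boot all_order all_algebra.
From mathcomp Require Import ring lra zify.
Import Order.TTheory GRing.Theory Num.Theory.
Local Open Scope ring_scope.

Lemma emax_spec (R : realFieldType) n (e : {set 'I_n}) (f : 'I_n -> R) :
  e != set0 -> (exists2 a, a \in e & emax e f = f a) /\
               (forall u, u \in e -> f u <= emax e f).
Proof.
move=> ne; rewrite /emax; case: pickP => [u0 u0e|H]; last first.
  by case/set0Pn: ne => x; rewrite H.
split.
  apply: (big_ind (fun y => exists2 a, a \in e & y = f a)).
  - by exists u0.
  - move=> x y [a ae ->] [b be ->]; rewrite /Order.max; case: ifP => _.
      by exists b.
    by exists a.
  - by move=> i ie; exists i.
by move=> u ue; apply: le_bigmax_cond.
Qed.

Lemma emin_spec (R : realFieldType) n (e : {set 'I_n}) (f : 'I_n -> R) :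
  e != set0 -> (exists2 a, a \in e & emin e f = f a) /\
               (forall u, u \in e -> emin e f <= f u).
Proof.
move=> ne; rewrite /emin; case: pickP => [u0 u0e|H]; last first.
  by case/set0Pn: ne => x; rewrite H.
split.
  apply: (big_ind (fun y => exists2 a, a \in e & y = f a)).
  - by exists u0.
  - move=> x y [a ae ->] [b be ->]; rewrite /Order.min; case: ifP => _.
      by exists a.
    by exists b.
  - by move=> i ie; exists i.
by move=> u ue; apply: bigmin_le_cond.
Qed.

Lemma pairs_sum (R : realFieldType) n (e : {set 'I_n}) (h : 'I_n -> R) :
  \sum_(u in e) \sum_(v in e | (u < v)%N) (h u + h v) ^+ 2 =
  (#|e|%:R - 2) * \sum_(u in e) h u ^+ 2 + (\sum_(u in e) h u) ^+ 2.
Proof.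
set g := fun u v => (h u + h v) ^+ 2.
set T := \sum_(u in e) _.
set S1 := \sum_(u in e) h u.
set S2 := \sum_(u in e) h u ^+ 2.
have full : \sum_(u in e) \sum_(v in e) g u v = 2 * #|e|%:R * S2 + 2 * S1 ^+ 2.
  have -> : \sum_(u in e) \sum_(v in e) g u v =
            \sum_(u in e) (#|e|%:R * h u ^+ 2 + 2 * h u * S1 + S2).
    apply: eq_bigr => u _.
    rewrite /g; under eq_bigr => v _ do rewrite sqrrD.
    rewrite !big_split /= sumr_const /S1 mulr_sumr /S2.
    have E : \sum_(i in e) 2 * h u * h i = \sum_(i in e) h u * h i + \sum_(i in e) h u * h i.
      by rewrite -big_split; apply: eq_bigr => i _ /=; ring.
    rewrite E -mulr_natr; ring.
  rewrite !big_split /= sumr_const -!mulr_suml -!mulr_sumr -/S1 -/S2 -mulr_natr.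
  ring.
have split : forall u, u \in e -> \sum_(v in e) g u v =
   \sum_(v in e | (u < v)%N) g u v + \sum_(v in e | (v < u)%N) g u v + g u u.
  move=> u ue; rewrite (bigID (fun v : 'I_n => (u < v)%N) (fun v => v \in e) (g u)) /= -addrA; congr (_ + _).
  rewrite (bigD1 u) /=; last by rewrite ue ltnn.
  rewrite addrC; congr (_ + _); apply: eq_bigl => v.
  rewrite -andbA; congr (_ && _).
  rewrite -leqNgt -val_eqE /=. 
  case: (ltngtP v u) => //.
have swap : \sum_(u in e) \sum_(v in e | (v < u)%N) g u v = T.
  rewrite (exchange_big_dep (fun v => v \in e)) /=; last by move=> i j _ /andP[].
  apply: eq_bigr => v ve; apply: eq_big => u.
    by rewrite ve.
  by move=> _; rewrite /g addrC.
have diag : \sum_(u in e) g u u = 4 * S2.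
  rewrite /S2 mulr_sumr; apply: eq_bigr => u _; rewrite /g; ring.
have : T + T + 4 * S2 = 2 * #|e|%:R * S2 + 2 * S1 ^+ 2.
  rewrite -full (eq_bigr _ split) !big_split /= swap diag //.
move=> H.
have -> : T = (T + T + 4 * S2) / 2 - 2 * S2 by field.
rewrite H; field => //.
Qed.

Theorem lemma7 (R : realFieldType) (n : nat) (E : {set {set 'I_n}})
  (w : {set 'I_n} -> R) (f : 'I_n -> R) (e : {set 'I_n}) :
  hypergraph E w -> e \in E -> (2 <= rank e)%N ->
  let lhs := (emax e f + emin e f) ^+ 2 in
  let rhs := \sum_(u in e) \sum_(v in e | (u < v)%N)
               ((rank e)%:R - 1)^-1 * (f u + f v) ^+ 2 in
  lhs <= rhs /\
  (lhs = rhs <-> ((#|[set v in e | f v != 0%R]| <= 1)%N \/ rank e = 2%N)).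
Proof.
move=> _ _; rewrite /rank => k2 /=.
have ne : e != set0.
  by apply/set0Pn/card_gt0P; apply: leq_trans k2.
have [[a0 a0e Ma] Mub] := @emax_spec _ _ e f ne.
have [[b0 b0e mb] mlb] := @emin_spec _ _ e f ne.
have [a [b [ae [be [ab [fa fb]]]]]] : exists a b, a \in e /\ b \in e /\ a != b /\
    emax e f = f a /\ emin e f = f b.
  case: (eqVneq a0 b0) => [eq|neq]; last by exists a0, b0.
  subst b0.
  have : (0 < #|e :\ a0|)%N.
    by move: k2; rewrite (cardsD1 a0) a0e.
  case/card_gt0P => c; rewrite in_setD1 => /andP[ca ce].
  exists a0, c; do !split => //; first by rewrite eq_sym.
  apply/le_anti; rewrite mlb //= mb -Ma Mub //.
rewrite fa fb in Mub mlb *.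
move: Mub mlb; set M := f a; set m := f b => Mub mlb.
under eq_bigr => u _ do rewrite -mulr_sumr.
rewrite -mulr_sumr pairs_sum.
set rest := e :\ a :\ b.
have restP : forall x, (x \in rest) = [&& x != b, x != a & x \in e].
  by move=> x; rewrite !in_setD1.
have dec : forall h : 'I_n -> R, \sum_(u in e) h u = h a + h b + \sum_(x in rest) h x.
  move=> h; rewrite (bigD1 a) //= (bigD1 b) /=; last by rewrite be eq_sym ab.
  rewrite addrA; congr (_ + _); apply: eq_bigl => x; rewrite restP.
  by case: (x \in e); case: (x != a); case: (x != b).
have cr : #|e| = (#|rest| + 2)%N.
  rewrite (cardsD1 a e) ae (cardsD1 b (e :\ a)) in_setD1 be eq_sym ab /=.
  by rewrite !add1n addn2.
rewrite !dec cr natrD.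
set r := #|rest|%:R.
set R1 := \sum_(x in rest) f x.
set R2 := \sum_(x in rest) f x ^+ 2.
pose g x := 2 * (M + m) * f x - 2 * M * m.
have Gsum : \sum_(x in rest) g x = 2 * (M + m) * R1 - 2 * M * m * r.
  rewrite /g sumrB -mulr_sumr sumr_const; congr (_ - _); by rewrite /r mulr_natr.
set G := \sum_(x in rest) g x in Gsum.
have gpos : forall x, x \in rest -> 2 * f x ^+ 2 <= g x.
  move=> x; rewrite restP => /and3P[_ _ xe].
  have h1 := Mub x xe; have h2 := mlb x xe.
  rewrite /g; nra.
have Gge0 : 0 <= G.
  apply: sumr_ge0 => x xr; apply: le_trans (gpos x xr).
  by rewrite mulr_ge0 // sqr_ge0.
have R2ge0 : 0 <= R2 by apply: sumr_ge0 => x _; rewrite sqr_ge0.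
have rge0 : 0 <= r by rewrite ler0n.
set D := r * R2 + G + R1 ^+ 2.
have Dge0 : 0 <= D.
  by rewrite /D !addr_ge0 ?sqr_ge0 ?mulr_ge0.
have rhsE : (r + 2 - 1)^-1 *
    ((r + 2 - 2) * (f a ^+ 2 + f b ^+ 2 + R2) + (f a + f b + R1) ^+ 2)
    = (M + m) ^+ 2 + (r + 1)^-1 * D.
  rewrite /D Gsum -/M -/m.
  have rn0 : r + 1 != 0 by apply: lt0r_neq0; lra.
  have -> : r + 2 - 1 = r + 1 by ring.
  field => //.
rewrite rhsE; split.
  by rewrite lerDl mulr_ge0 // invr_ge0; lra.
have Deq : (M + m) ^+ 2 = (M + m) ^+ 2 + (r + 1)^-1 * D <-> D = 0.
  split.
    move=> H; have : (r + 1)^-1 * D == 0 by apply/eqP; lra.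
    rewrite mulf_eq0 invr_eq0; case/orP => /eqP //; lra.
  by move=> ->; rewrite mulr0 addr0.
rewrite Deq.
have twoNZ : forall p q, p \in e -> q \in e -> p != q -> f p != 0 -> f q != 0 ->
    (#|[set v in e | f v != 0%R]| <= 1)%N -> False.
  move=> p q pe qe pq fp fq.
  have : [set p; q] \subset [set v in e | f v != 0].
    by apply/subsetP => x; rewrite !inE => /orP[] /eqP ->; rewrite ?pe ?qe ?fp ?fq.
  move/subset_leq_card; rewrite cards2 pq => h1 h2.
  by have := leq_trans h1 h2.
split.
- move=> D0.
  case: (eqVneq #|rest| 0%N) => [r0|rn0].
    by right; rewrite r0.
  left.
  have G0 : G = 0 by move: D0; rewrite /D => D0; nra.
  have fx0 : forall x, x \in rest -> f x = 0.
    move=> x xr; have := gpos x xr.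
    have -> : g x = 0.
      apply: (psumr_eq0P _ G0) => // y yr.
      by apply: le_trans (gpos y yr); rewrite mulr_ge0 // sqr_ge0.
    move=> h; apply/eqP; rewrite -sqrf_eq0; apply/eqP.
    by apply: le_anti; rewrite sqr_ge0 andbT; lra.
  have Mm0 : M * m = 0.
    have : (0 < #|rest|)%N by rewrite lt0n.
    case/card_gt0P => x xr.
    have gx : g x = 0.
      apply: (psumr_eq0P _ G0) => // y yr.
      by apply: le_trans (gpos y yr); rewrite mulr_ge0 // sqr_ge0.
    move: gx; rewrite /g fx0 //; lra.
  have inab : forall v, v \in [set v in e | f v != 0] -> v = a \/ v = b.
    move=> v; rewrite inE => /andP[ve fv].
    case: (eqVneq v a) => [->|va]; first by left.
    case: (eqVneq v b) => [->|vb]; first by right.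
    have : v \in rest by rewrite restP va vb ve.
    by move/fx0 => h; rewrite h eqxx in fv.
  move/eqP: Mm0; rewrite mulf_eq0 => /orP[] /eqP H0.
  + apply: (@leq_trans #|[set b]|); last by rewrite cards1.
    apply/subset_leq_card/subsetP => v vN; rewrite inE.
    case: (inab v vN) => [va|->//]; move: vN; rewrite inE va => /andP[_].
    by rewrite -/M H0 eqxx.
  + apply: (@leq_trans #|[set a]|); last by rewrite cards1.
    apply/subset_leq_card/subsetP => v vN; rewrite inE.
    case: (inab v vN) => [->//|vb]; move: vN; rewrite inE vb => /andP[_].
    by rewrite -/m H0 eqxx.
- case => [N1|k2'].
  + have fx0 : forall x, x \in rest -> f x = 0.
      move=> x; rewrite restP => /and3P[xb xa xe].
      case: (ltgtP (f x) 0) => // H; exfalso.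
      * apply: (twoNZ x b xe be xb (ltr0_neq0 H)) => //.
        exact: (ltr0_neq0 (le_lt_trans (mlb x xe) H)).
      * apply: (twoNZ x a xe ae xa (lt0r_neq0 H)) => //.
        exact: (lt0r_neq0 (lt_le_trans H (Mub x xe))).
    have Mm0 : M * m = 0.
      case: (eqVneq M 0) => [->|Mn]; first by rewrite mul0r.
      case: (eqVneq m 0) => [->|mn]; first by rewrite mulr0.
      by exfalso; apply: (twoNZ a b ae be ab Mn mn N1).
    have R1z : R1 = 0 by apply: big1 => x xr; exact: fx0.
    have R2z : R2 = 0 by apply: big1 => x xr; rewrite fx0 // expr0n.
    have G0 : G = 0.
      apply: big1 => x xr.
      by rewrite /g (fx0 x xr) mulr0 -mulrA Mm0 mulr0 subr0.
    by rewrite /D R1z R2z G0; ring.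
  + have r0 : #|rest| = 0%N by move: k2'; lia.
    have rs0 := cards0_eq r0.
    have R1z : R1 = 0 by rewrite /R1 rs0 big_set0.
    have G0 : G = 0 by rewrite /G rs0 big_set0.
    by rewrite /D R1z G0 /r r0; ring.
Qed.
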